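(* Let $A=\mathrm{diag}(G_1,\dots,G_m,[1])\in\mathbb{R}^{n\times n}$ (where the trailing $1\times 1$ block $[1]$ may or may not be present), with $G_j=\begin{bmatrix}c_j&s_j\\-s_j&c_j\end{bmatrix}$, $c_j^2+s_j^2=1$, $s_j\neq 0$, and $0<c_1<c_2<\cdots<c_m$. Let $v_0\in\mathbb{R}^n$ be a unit norm vector with $d(A,v_0)\geq 2$, and consider the iteration ACI($1$): $$\widetilde w_k=(A-\alpha_kI)v_k,\ \alpha_k=v_k^TAv_k,\quad w_k=\widetilde w_k/\|\widetilde w_k\|,\quad \widetilde v_{k+1}=(A^T-\beta_kI)w_k,\ \beta_k=w_k^TAw_k,\quad v_{k+1}=\widetilde v_{k+1}/\|\widetilde v_{k+1}\|.$$ Then the sequences $\{\alpha_k\}$ and $\{\beta_k\}$ converge to limits $\alpha$ and $\beta$ with $\alpha=\beta$, this common value is the real part of an eigenvalue of $A$ (namely $\alpha=\beta=c_j$ for some $j\in\{1,\dots,m\}$), and every limit vector $v_*$ of the sequence $\{v_k\}$ satisfies $d(A,v_* )=2$.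
   Context: $d(A,v)$ denotes the grade of $v$ w.r.t. $A$, i.e. the degree of the monic polynomial $p$ of smallest degree with $p(A)v=0$. $\|\cdot\|$ is the Euclidean norm. $A$ is orthogonal; under the hypotheses all vectors $\widetilde w_k,\widetilde v_{k+1}$ are nonzero. *)

(* Defs.v *)
From HB Require Import structures.
From mathcomp Require Import all_boot all_order all_algebra.
From mathcomp Require Import all_classical all_reals all_analysis.
Set Implicit Arguments. Unset Strict Implicit. Unset Printing Implicit Defensive.
Import Order.TTheory GRing.Theory Num.Theory.
Import numFieldNormedType.Exports.
Local Open Scope classical_set_scope.
Local Open Scope ring_scope.

Section Defs.
Variable R : realType.

(* A = diag(G_0, ..., G_{m-1}, [1]) of size 2m + b, the trailing [1] present
   iff b = true; G_k = [c_k s_k; -s_k c_k] occupies rows/cols 2k, 2k+1. *)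
Definition rotA (m : nat) (b : bool) (c s : nat -> R) : 'M[R]_(m.*2 + b) :=
  \matrix_(i, j)
    if ((i : nat)./2 < m)%N then
      if (i : nat)./2 == (j : nat)./2 then
        if i == j :> nat then c (i : nat)./2
        else if ~~ odd i then s (i : nat)./2 else - s (i : nat)./2
      else 0
    else (if i == j :> nat then 1 else 0).

Definition polyAv n (A : 'M[R]_n) (p : {poly R}) (v : 'cV[R]_n) : 'cV[R]_n :=
  \sum_(i < size p) p`_i *: iter i (mulmx A) v.

Definition annih_deg n (A : 'M[R]_n) (v : 'cV[R]_n) (k : nat) : Prop :=
  exists p : {poly R}, [/\ p \is monic, size p = k.+1 & polyAv A p v = 0].

(* grade d(A,v): the smallest degree of a monic annihilating polynomial
   (such a polynomial always exists by Cayley-Hamilton; 0 is a junk default) *)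
Definition grade n (A : 'M[R]_n) (v : 'cV[R]_n) : nat :=
  match pselect (exists k, `[< annih_deg A v k >]) with
  | left h => ex_minn h
  | right _ => 0%N
  end.

Definition enorm n (v : 'cV[R]_n) : R := Num.sqrt (\sum_i v i 0 ^+ 2).

Definition rq n (A : 'M[R]_n) (x : 'cV[R]_n) : R := (x^T *m A *m x) 0 0.

Definition normalize n (x : 'cV[R]_n) : 'cV[R]_n := (enorm x)^-1 *: x.

Definition aci_w n (A : 'M[R]_n) (v : 'cV[R]_n) : 'cV[R]_n :=
  normalize ((A - (rq A v)%:M) *m v).

Definition aci_next n (A : 'M[R]_n) (v : 'cV[R]_n) : 'cV[R]_n :=
  let w := aci_w A v in normalize ((A^T - (rq A w)%:M) *m w).

Fixpoint aci_v n (A : 'M[R]_n) (v0 : 'cV[R]_n) (k : nat) : 'cV[R]_n :=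
  if k is k'.+1 then aci_next A (aci_v A v0 k') else v0.

Definition aci_alpha n (A : 'M[R]_n) v0 (k : nat) : R := rq A (aci_v A v0 k).
Definition aci_beta n (A : 'M[R]_n) v0 (k : nat) : R :=
  rq A (aci_w A (aci_v A v0 k)).

Definition limit_vector n (u : nat -> 'cV[R]_n) (vstar : 'cV[R]_n) : Prop :=
  exists phi : nat -> nat, (forall k, (phi k < phi k.+1)%N) /\
    forall i : 'I_n, (fun k => u (phi k) i 0) @ \oo --> vstar i 0.

End Defs.

(* Main.v *)
Require Import Defs.
From HB Require Import structures.
From mathcomp Require Import all_boot all_order all_algebra.
From mathcomp Require Import all_classical all_reals all_analysis.
From mathcomp Require Import ring lra zify.
Set Implicit Arguments. Unset Strict Implicit. Unset Printing Implicit Defensive.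
Import Order.TTheory GRing.Theory Num.Theory.
Import numFieldNormedType.Exports.
Local Open Scope classical_set_scope.
Local Open Scope ring_scope.
Lemma half_eq_odd (i j : nat) : i./2 = j -> i = (odd i + j.*2)%N.
Proof. by move=> <-; rewrite odd_double_half. Qed.

Lemma sum_two (R : realType) n (F : 'I_n -> R) j (h1 : (j.*2.+1 < n)%N) :
  (forall l : 'I_n, (l : nat)./2 != j -> F l = 0) ->
  \sum_l F l = F (Ordinal (ltnW h1)) + F (Ordinal h1).
Proof.
move=> H.
rewrite (bigD1 (Ordinal (ltnW h1))) //= (bigD1 (Ordinal h1)) /=; last first.
  by rewrite -val_eqE /= gtn_eqF.
rewrite addrA big1 ?addr0 // => l /andP[h2 h3]; apply: H; apply/eqP => e.
have := half_eq_odd e; case: (odd l) => /= el.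
  by move: h3; rewrite -val_eqE /= el add1n eqxx.
by move: h2; rewrite -val_eqE /= el add0n eqxx.
Qed.
Lemma eq_odd_half (l i : nat) : l./2 = i./2 -> (l == i) = (odd l == odd i).
Proof.
move=> e; apply/eqP/eqP => [->//|o].
by rewrite -(odd_double_half l) -(odd_double_half i) o e.
Qed.

Section Mat.
Variables (R : realType) (m : nat) (bt : bool) (c s : nat -> R).
Local Notation nn := (m.*2 + bt)%N.
Local Notation A := (rotA m bt c s).

Definition CC (j : nat) : R := if (j < m)%N then c j else 1.

Lemma half_le (i : 'I_nn) : ((i : nat)./2 <= m)%N.
Proof.
have hb : (nat_of_bool bt <= 1)%N by case: bt.
have h : ((i : nat) <= m.*2)%N.
  by have := ltn_ord i; move: (i : nat) => x; rewrite -!muln2; lia.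
by move: (half_leq h); rewrite doubleK.
Qed.

Lemma A_off (i k : 'I_nn) : (i : nat)./2 != (k : nat)./2 -> A i k = 0.
Proof.
move=> h; rewrite mxE (negbTE h); case: ifP => // _; case: eqP => // e.
by move: h; rewrite e eqxx.
Qed.

Lemma A_top (i l : 'I_nn) : (m <= (i : nat)./2)%N -> A l i = (l == i)%:R.
Proof.
move=> hi; rewrite mxE; case: ifP => hl.
  have ne : (l : nat)./2 != (i : nat)./2 by rewrite neq_ltn (leq_trans hl hi).
  rewrite (negbTE ne); case: eqP => [e|//].
  by move: ne; rewrite e eqxx.
by rewrite -val_eqE; case: eqP.
Qed.

Lemma A_blk (l i : 'I_nn) j : (l : nat)./2 = j -> (i : nat)./2 = j -> (j < m)%N ->
  A l i = if odd l == odd i then c j else if odd l then - s j else s j.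
Proof.
move=> hl hi hj; rewrite mxE hl hi hj eqxx eq_odd_half ?hl ?hi //.
by case: (odd l).
Qed.

Lemma A_sym (i k : 'I_nn) : A i k + A k i = (i == k)%:R * (CC (i : nat)./2 *+ 2).
Proof.
case: (eqVneq ((i : nat)./2) ((k : nat)./2)) => e; last first.
  have -> : (i == k) = false.
    by apply/negbTE; apply: contra e => /eqP ->.
  rewrite (A_off e) (A_off (i:=k) (k:=i)) ?addr0; last by rewrite eq_sym.
  by rewrite (_ : false%:R = 0) // mul0r.
case: (ltnP ((i : nat)./2) m) => hm.
  rewrite (A_blk (l:=i) (i:=k) erefl (esym e) hm).
  rewrite (A_blk (l:=k) (i:=i) (esym e) erefl hm) -val_eqE /=.
  rewrite (eq_odd_half e) /CC hm.
  by case: (odd i); case: (odd k) => /=; rewrite ?mul1r ?mul0r ?subrr ?addrN ?addNr.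
rewrite (A_top _ hm) (A_top _ (leq_trans hm (eq_leq e))) /CC ltnNge hm /=.
rewrite eq_sym; case: eqP => _; rewrite ?mul1r ?mul0r ?addr0 //.
Qed.

Hypothesis hcs : forall j, (j < m)%N -> c j ^+ 2 + s j ^+ 2 = 1.

Lemma A_orth : A^T *m A = 1%:M.
Proof.
apply/matrixP => i k; rewrite !mxE.
under eq_bigr do rewrite mxE.
case: (eqVneq ((i : nat)./2) ((k : nat)./2)) => e; last first.
  have -> : (i == k) = false by apply/negbTE; apply: contra e => /eqP ->.
  rewrite big1 // => l _.
  case: (eqVneq ((l : nat)./2) ((i : nat)./2)) => el.
    by rewrite (A_off (i:=l) (k:=k)) ?mulr0 // el.
  by rewrite A_off ?mul0r.
case: (ltnP ((i : nat)./2) m) => hm.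
  have h1 : (((i : nat)./2).*2.+1 < nn)%N.
    by move: hm; move: ((i : nat)./2) => x; rewrite -!muln2; lia.
  rewrite (sum_two (j := (i : nat)./2) h1); last first.
    by move=> l hl; rewrite A_off ?mul0r.
  have e0 : ((Ordinal (ltnW h1) : nat)./2 = (i : nat)./2) by rewrite /= doubleK.
  have e1 : ((Ordinal h1 : nat)./2 = (i : nat)./2) by rewrite /= uphalf_double.
  rewrite (A_blk e0 erefl hm) (A_blk e0 (esym e) hm).
  rewrite (A_blk e1 erefl hm) (A_blk e1 (esym e) hm) /=.
  rewrite odd_double -val_eqE /= (eq_odd_half e).
  have := hcs hm.
  by move=> h; case: (odd i); case: (odd k) => /=; rewrite -?h; ring.
have hmk : (m <= (k : nat)./2)%N by rewrite -e.
under eq_bigr => l _ do rewrite (A_top l hm) (A_top l hmk).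
have ik : i = k.
  apply/val_inj; change (nat_of_ord i = nat_of_ord k); have := half_le i; have := half_le k.
  have := odd_double_half i; have := odd_double_half k.
  have hb : (nat_of_bool bt <= 1)%N by case: bt.
  move: (ltn_ord i) (ltn_ord k) hm e hb.
  move: (i : nat) (k : nat) => x y; rewrite -!muln2.
  case: (odd x); case: (odd y) => /=; lia.
rewrite -ik eqxx (bigD1 i) //= eqxx mul1r big1 ?addr0 // => l /negbTE ->.
by rewrite mul0r.
Qed.

End Mat.
Section Quad.
Variable R : realType.

Definition Q n (h : nat -> R) (x : 'cV[R]_n) : R := \sum_(i < n) h i * x i 0 ^+ 2.
Definition dg n (h : nat -> R) : 'M[R]_n := diag_mx (\row_(i < n) h i).
Arguments dg {n} h.

Lemma Q_form n (h : nat -> R) (x : 'cV[R]_n) : (x^T *m dg h *m x) 0 0 = Q h x.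
Proof.
rewrite /dg mul_mx_diag !mxE; apply: eq_bigr => i _; rewrite !mxE; ring.
Qed.

Lemma BtB n (B : 'M[R]_n) (cc : nat -> R) (a : R) :
  B^T *m B = 1%:M -> B + B^T = dg (fun i => cc i *+ 2) ->
  (B^T - a%:M) *m (B - a%:M) = dg (fun i => 1 + a ^+ 2 - 2 * a * cc i).
Proof.
move=> hB hs; rewrite mulmxBl !mulmxBr hB -scalar_mxM mul_scalar_mx mul_mx_scalar.
apply/matrixP => i j; have := congr1 (fun M : 'M[R]_n => M i j) hs; rewrite !mxE /=.
case: (eqVneq i j) => [->|ne] /=; rewrite ?mulr1n ?mulr0n => h.
  rewrite mulr2n in h; have -> : B j j = cc j by lra.
  ring.
have -> : B j i = - B i j by lra.
ring.
Qed.

Lemma Q_shift n (B : 'M[R]_n) (cc g : nat -> R) (a : R) (v : 'cV[R]_n) :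
  B^T *m B = 1%:M -> B + B^T = dg (fun i => cc i *+ 2) ->
  dg g *m B = B *m dg g ->
  Q g ((B - a%:M) *m v) = Q (fun i => g i * (1 + a ^+ 2 - 2 * a * cc i)) v.
Proof.
move=> hB hs hc; rewrite -!Q_form trmx_mul !mulmxA.
have htr : (B - a%:M)^T = B^T - a%:M by rewrite linearB /= tr_scalar_mx.
have hc' : B^T *m dg g = dg g *m B^T.
  have := congr1 trmx hc; rewrite !trmx_mul /dg tr_diag_mx; move=> ->.
  by [].
have key : (B^T - a%:M) *m dg g = dg g *m (B^T - a%:M).
  by rewrite mulmxBl mulmxBr hc' scalar_mxC.
rewrite htr -!mulmxA (mulmxA (B^T - a%:M)) key -(mulmxA (dg g)).
rewrite (mulmxA (B^T - a%:M)) (BtB _ hB hs) !mulmxA -(mulmxA v^T).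
rewrite -(mulmxA _ (dg g)) (mulmxA v^T). congr ((_ *m _ *m _) 0 0); apply/matrixP => i j; rewrite /dg mul_diag_mx !mxE.
by case: eqP => _; rewrite ?mulr1n ?mulr0n ?mulr0.
Qed.

End Quad.
Arguments dg {R n} h.
Section Dyn.
Variables (R : realType) (N : nat) (C : nat -> R) (j0 : nat) (delta : R).
Hypothesis hj0 : (j0 < N)%N.
Hypothesis hC : forall j, (j < N)%N -> 0 <= C j <= 1.
Hypothesis hC0 : 0 < C j0 < 1.
Hypothesis hd : 0 < delta <= 1.
Hypothesis hinc : forall j, (j0 < j < N)%N -> C j0 + delta <= C j.

Definition fa (a t : R) := 1 + a ^+ 2 - 2 * a * t.
Definition avg (pi : nat -> R) := \sum_(j < N) C j * pi j.
Definition step (a : R) (pi : nat -> R) (j : nat) :=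
  fa a (C j) * pi j / \sum_(l < N) fa a (C l) * pi l.
Definition good (pi : nat -> R) :=
  [/\ forall j, (j < N)%N -> 0 <= pi j, \sum_(j < N) pi j = 1,
      forall j, (j < j0)%N -> pi j = 0 & 0 < pi j0].
Definition EE (pi : nat -> R) := (1 - pi j0) / pi j0.
Definition theta := 1 - C j0 * delta.

Let o0 := Ordinal hj0.

Lemma sum_split (F : nat -> R) :
  \sum_(j < N) F j = F j0 + \sum_(j < N | j != o0) F j.
Proof. by rewrite (bigD1 o0). Qed.

Lemma fa_ge0 a j : (j < N)%N -> 0 <= fa a (C j).
Proof.
move=> hj; have := hC hj; rewrite /fa => /andP[h1 h2].
have := sqr_ge0 (a - C j); nra.
Qed.

Lemma fa0_gt0 a : 0 < fa a (C j0).
Proof.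
rewrite /fa; case/andP: hC0 => h1 h2; have := sqr_ge0 (a - C j0).
have : C j0 * C j0 < 1 by nra.
nra.
Qed.

Lemma fa0_le2 a : 0 <= a <= 1 -> fa a (C j0) <= 2.
Proof. rewrite /fa; case/andP: hC0 => h1 h2 /andP[h3 h4]; nra. Qed.

Lemma theta_ge0 : 0 <= theta.
Proof. rewrite /theta; case/andP: hC0 => h1 h2; case/andP: hd => h3 h4; nra. Qed.

Lemma theta_lt1 : theta < 1.
Proof. rewrite /theta; case/andP: hC0 => h1 h2; case/andP: hd => h3 h4; nra. Qed.

Lemma good_ext pi pi' : (forall j, (j < N)%N -> pi j = pi' j) ->
  good pi -> good pi'.
Proof.
move=> e [h1 h2 h3 h4]; split.
- by move=> j hj; rewrite -e ?h1.
- by rewrite -h2; apply: eq_bigr => j _; rewrite e.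
- by move=> j hj; rewrite -e ?h3 // (ltn_trans hj hj0).
- by rewrite -e.
Qed.

Lemma avg_ext pi pi' : (forall j, (j < N)%N -> pi j = pi' j) -> avg pi = avg pi'.
Proof. by move=> e; apply: eq_bigr => j _; rewrite e. Qed.

Lemma good_ge0 pi : good pi -> \sum_(j < N | j != o0) pi j = 1 - pi j0.
Proof. by case=> h1 h2 h3 h4; rewrite -h2 sum_split; ring. Qed.

Lemma good_rest_ge0 pi : good pi -> 0 <= \sum_(j < N | j != o0) pi j.
Proof. by case=> h1 h2 h3 h4; apply: sumr_ge0 => j _; apply: h1. Qed.

Lemma good_le1 pi : good pi -> pi j0 <= 1.
Proof. move=> g; have := good_rest_ge0 g; rewrite good_ge0 //; lra. Qed.

Lemma EE_ge0 pi : good pi -> 0 <= EE pi.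
Proof.
move=> g; have := good_le1 g; case: g => h1 h2 h3 h4 h5.
by rewrite /EE divr_ge0 // ?subr_ge0 // ltW.
Qed.

Lemma le_EE pi : good pi -> 1 - pi j0 <= EE pi.
Proof.
move=> g; have := good_le1 g; case: g => h1 h2 h3 h4 h5.
rewrite /EE ler_pdivlMr //; nra.
Qed.

Lemma avg_bounds pi : good pi -> C j0 <= avg pi <= 1.
Proof.
case=> h1 h2 h3 h4; apply/andP; split.
  rewrite -[C j0]mulr1 -h2 mulr_sumr /avg; apply: ler_sum => j _.
  case: (ltngtP j j0) => h.
  - by rewrite h3 // !mulr0.
  - have := hinc (j := j); rewrite h ltn_ord => /(_ isT) hc.
    apply: ler_wpM2r; first exact: h1.
    case/andP: hd => hd1 _; lra.
  - by rewrite h.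
rewrite -h2 /avg; apply: ler_sum => j _.
have := h1 _ (ltn_ord j); have := hC (ltn_ord j); case/andP=> a1 a2 a3; nra.
Qed.

Section StepA.
Variables (a : R) (pi : nat -> R).
Hypothesis gpi : good pi.
Hypothesis ha : C j0 <= a <= 1.

Let S := \sum_(l < N) fa a (C l) * pi l.

Lemma S_split : S = fa a (C j0) * pi j0 + \sum_(l < N | l != o0) fa a (C l) * pi l.
Proof. by rewrite /S (sum_split (fun l => fa a (C l) * pi l)). Qed.

Lemma rest_ge0 : 0 <= \sum_(l < N | l != o0) fa a (C l) * pi l.
Proof.
case: gpi => h1 h2 h3 h4.
by apply: sumr_ge0 => j _; rewrite mulr_ge0 ?fa_ge0 ?h1.
Qed.

Lemma S_gt0 : 0 < S.
Proof.
rewrite S_split; have := rest_ge0; case: gpi => h1 h2 h3 h4.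
have := fa0_gt0 a; move=> hf hr.
have : 0 < fa a (C j0) * pi j0 by rewrite mulr_gt0.
lra.
Qed.

Lemma step_good : good (step a pi).
Proof.
have hS := S_gt0; case: gpi => h1 h2 h3 h4; split.
- move=> j hj; rewrite /step divr_ge0 ?mulr_ge0 ?fa_ge0 ?h1 //; exact: ltW.
- rewrite /step -mulr_suml -/S divff //; by apply: lt0r_neq0.
- by move=> j hj; rewrite /step h3 // mulr0 mul0r.
- by rewrite /step divr_gt0 // mulr_gt0 // fa0_gt0.
Qed.

Lemma step_EE : EE (step a pi) <= theta * EE pi.
Proof.
have hS := S_gt0; have hf := fa0_gt0 a.
have hT := good_ge0 gpi.
case: (gpi) => h1 h2 h3 h4.
set U := \sum_(l < N | l != o0) fa a (C l) * pi l.
have hSU : S = fa a (C j0) * pi j0 + U by rewrite S_split.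
have hp : 0 < fa a (C j0) * pi j0 by rewrite mulr_gt0.
have hU : U <= theta * fa a (C j0) * (1 - pi j0).
  rewrite -hT mulr_sumr; apply: ler_sum => j hj.
  case: (ltngtP j j0) => h.
  - by rewrite h3 // !mulr0.
  - apply: ler_wpM2r; first exact: h1.
    have := hinc (j := j); rewrite h ltn_ord => /(_ isT) hc.
    have hf2 := fa0_le2 (a := a).
    case/andP: ha => a1 a2; case/andP: hC0 => c1 c2; case/andP: hd => d1 d2.
    have : fa a (C j0) <= 2 by apply: hf2; apply/andP; split; lra.
    have h5 : C j0 * delta <= a * (C j - C j0) by nra.
    move=> h6.
    have e1 : fa a (C j) = fa a (C j0) - 2 * (a * (C j - C j0)) by rewrite /fa; ring.
    rewrite /theta e1 mulrBl mul1r.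
    set F := fa a (C j0) in h6 *; set Y := C j0 * delta in h5 *.
    set X := a * (C j - C j0) in h5 *.
    have h7 : 0 <= Y * (2 - F) by rewrite mulr_ge0 // ?subr_ge0 // /Y mulr_ge0 //; lra.
    rewrite mulrBr in h7; lra.
  - by move: hj; rewrite -val_eqE /= h eqxx.
rewrite /EE /step -/S.
have -> : (1 - fa a (C j0) * pi j0 / S) / (fa a (C j0) * pi j0 / S)
   = U / (fa a (C j0) * pi j0).
  rewrite hSU; field.
  by rewrite -hSU !lt0r_neq0.
rewrite ler_pdivrMr //.
have -> : theta * ((1 - pi j0) / pi j0) * (fa a (C j0) * pi j0)
   = theta * fa a (C j0) * (1 - pi j0).
  by field; apply: lt0r_neq0.
exact: hU.
Qed.

End StepA.

Lemma avg_close pi : good pi -> `|avg pi - C j0| <= EE pi.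
Proof.
move=> g; apply: le_trans (le_EE g).
have hT := good_ge0 g; case: (g) => h1 h2 h3 h4.
have -> : avg pi - C j0 = \sum_(j < N | j != o0) (C j - C j0) * pi j.
  rewrite /avg -[C j0 in LHS]mulr1 -h2 mulr_sumr -sumrB.
  rewrite (sum_split (fun j => C j * pi j - C j0 * pi j)) subrr add0r.
  by apply: eq_bigr => j _; rewrite mulrBl.
rewrite -hT; apply: le_trans (ler_norm_sum _ _ _) _; apply: ler_sum => j _.
rewrite normrM (ger0_norm (h1 _ (ltn_ord j))).
have := hC (ltn_ord j); have := hC hj0; have := h1 _ (ltn_ord j).
move=> p0 /andP[x1 x2] /andP[y1 y2].
have : `|C j - C j0| <= 1 by rewrite ler_norml; apply/andP; split; lra.
nra.
Qed.

Lemma coord_small pi j : good pi -> (j < N)%N -> j != j0 -> pi j <= EE pi.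
Proof.
move=> g hj ne; apply: le_trans (le_EE g).
rewrite -(good_ge0 g) (bigD1 (Ordinal hj)) /=; last by rewrite -val_eqE.
case: g => h1 h2 h3 h4.
have : 0 <= \sum_(i < N | (i != o0) && (i != Ordinal hj)) pi i.
  by apply: sumr_ge0 => i _; apply: h1.
lra.
Qed.

Lemma seq_EE (p q : nat -> nat -> R) : good (p 0%N) ->
  (forall k j, (j < N)%N -> q k j = step (avg (p k)) (p k) j) ->
  (forall k j, (j < N)%N -> p k.+1 j = step (avg (q k)) (q k) j) ->
  forall k, [/\ good (p k), good (q k), EE (p k) <= theta ^+ k * EE (p 0%N)
              & EE (q k) <= theta ^+ k * EE (p 0%N)].
Proof.
move=> g0 hq hp.
have th0 := theta_ge0; have th1 := theta_lt1.
have gq : forall k, good (p k) -> good (q k) /\ EE (q k) <= theta * EE (p k).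
  move=> k gk; have hb := avg_bounds gk.
  have e : forall j, (j < N)%N -> step (avg (p k)) (p k) j = q k j.
    by move=> j hj; rewrite hq.
  split; first exact: good_ext e (step_good _ gk).
  by rewrite /EE -(e _ hj0); apply: step_EE.
elim=> [|k [gk gqk hk hqk]].
  have [g1 h1] := gq 0%N g0; split => //; first by rewrite expr0 mul1r.
  rewrite expr0 mul1r; apply: le_trans h1 _; have := EE_ge0 g0; nra.
have hb := avg_bounds gqk.
have e : forall j, (j < N)%N -> step (avg (q k)) (q k) j = p k.+1 j.
  by move=> j hj; rewrite hp.
have gk1 : good (p k.+1) by exact: good_ext e (step_good _ gqk).
have hk1 : EE (p k.+1) <= theta ^+ k.+1 * EE (p 0%N).
  rewrite /EE -(e _ hj0) -/(EE _); apply: le_trans (step_EE gqk hb) _.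
  by rewrite exprS -mulrA ler_wpM2l.
have [g2 h2] := gq _ gk1; split => //.
apply: le_trans h2 _; apply: le_trans hk1; have := EE_ge0 gk1; nra.
Qed.

End Dyn.
Lemma cvg_geo (R : realType) (u : nat -> R) (l K th : R) : 0 <= th < 1 ->
  (forall k, `|u k - l| <= K * th ^+ k) -> u @ \oo --> l.
Proof.
move=> /andP[th0 th1] hu.
have h0 : (fun k => K * th ^+ k) @ \oo --> 0.
  have := cvgM (cvg_cst K) (cvg_expr (z := th) _); rewrite mulr0; apply.
  by rewrite ger0_norm.
apply/cvgrPdist_le => e he.
move/cvgrPdist_le : h0 => /(_ e he); apply: filterS => k.
rewrite sub0r normrN => hk.
by rewrite distrC; apply: le_trans (hu k) (le_trans (ler_norm _) hk).
Qed.
Section Entries.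
Variable R : realType.
Lemma dgM_e n (h : nat -> R) (M : 'M[R]_n) (i j : 'I_n) : (dg h *m M) i j = h i * M i j.
Proof. by rewrite /dg mul_diag_mx !mxE. Qed.
Lemma Mdg_e n (h : nat -> R) (M : 'M[R]_n) (i j : 'I_n) : (M *m dg h) i j = M i j * h j.
Proof. by rewrite /dg mul_mx_diag !mxE. Qed.
Lemma dg_e n (h : nat -> R) (i j : 'I_n) : dg h i j = (i == j)%:R * h i.
Proof. by rewrite /dg !mxE; case: eqP => _; rewrite ?mul1r ?mul0r ?mulr1n ?mulr0n. Qed.
Lemma add_e n (M M' : 'M[R]_n) (i j : 'I_n) : (M + M') i j = M i j + M' i j.
Proof. by rewrite !mxE. Qed.
Lemma tr_e n (M : 'M[R]_n) (i j : 'I_n) : M^T i j = M j i.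
Proof. by rewrite !mxE. Qed.
End Entries.

Section Spec.
Variables (R : realType) (m : nat) (bt : bool) (c s : nat -> R).
Hypothesis hcs : forall j, (j < m)%N -> c j ^+ 2 + s j ^+ 2 = 1.
Local Notation nn := (m.*2 + bt)%N.
Local Notation A := (rotA m bt c s).
Local Notation cc := (fun i : nat => CC m c (i./2)).

Definition P (j : nat) (x : 'cV[R]_nn) := Q (fun i => ((i./2 == j)%:R : R)) x.

Lemma A_symm : A + A^T = dg (fun i => cc i *+ 2).
Proof.
apply/matrixP => i j; rewrite add_e tr_e A_sym dg_e.
by case: eqP => [->|]; rewrite ?mul0r ?mul1r.
Qed.

Lemma A_comm (G : nat -> R) : dg (fun i => G (i./2)) *m A = A *m dg (fun i => G (i./2)).
Proof.
apply/matrixP => i j; rewrite dgM_e Mdg_e.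
case: (eqVneq ((i : nat)./2) ((j : nat)./2)) => e.
  by rewrite e mulrC.
by rewrite A_off // mulr0 mul0r.
Qed.

Lemma At_orth : (A^T)^T *m A^T = 1%:M.
Proof. by rewrite trmxK; apply: mulmx1C; apply: A_orth. Qed.

Lemma At_symm : A^T + (A^T)^T = dg (fun i => cc i *+ 2).
Proof. by rewrite trmxK addrC A_symm. Qed.

Lemma At_comm (G : nat -> R) : dg (fun i => G (i./2)) *m A^T = A^T *m dg (fun i => G (i./2)).
Proof.
have := congr1 trmx (A_comm G); rewrite !trmx_mul /dg tr_diag_mx.
by move=> ->.
Qed.

Lemma Q_blocks (G : nat -> R) (x : 'cV[R]_nn) :
  Q (fun i => G (i./2)) x = \sum_(j < m.+1) G j * P j x.
Proof.
rewrite /P /Q; under [RHS]eq_bigr do rewrite mulr_sumr.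
rewrite exchange_big /=; apply: eq_bigr => i _.
have hi : ((i : nat)./2 < m.+1)%N by rewrite ltnS half_le.
rewrite (bigD1 (Ordinal hi)) //= eqxx mul1r big1 ?addr0 // => j hj.
have -> : ((i : nat)./2 == j) = false.
  by apply/negbTE; apply: contra hj => /eqP e; rewrite -val_eqE /= e.
by rewrite mul0r mulr0.
Qed.

Lemma rq_Q (v : 'cV[R]_nn) : rq A v = Q cc v.
Proof.
have h1 : rq A v = (v^T *m A^T *m v) 0 0.
  by rewrite /rq -(tr_e (v^T *m A *m v)) !trmx_mul trmxK mulmxA.
have h2 : (v^T *m (A + A^T) *m v) 0 0 = (Q (fun i => cc i *+ 2) v).
  by rewrite A_symm Q_form.
have h3 : Q (fun i => cc i *+ 2) v = Q cc v *+ 2.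
  by rewrite /Q -sumrMnl; apply: eq_bigr => i _; rewrite mulrnAl.
move: h2; rewrite h3 mulmxDr mulmxDl add_e -/(rq A v) -h1 mulr2n; lra.
Qed.

Lemma Q_normalize (h : nat -> R) (x : 'cV[R]_nn) :
  Q h (normalize x) = Q h x / Q (fun _ => 1) x.
Proof.
have e : enorm x = Num.sqrt (Q (fun _ => 1) x).
  by rewrite /enorm /Q; congr Num.sqrt; apply: eq_bigr => i _; rewrite mul1r.
have hge : 0 <= Q (fun _ => 1) x by apply: sumr_ge0 => i _; rewrite mul1r sqr_ge0.
rewrite /normalize /Q mulrC mulr_sumr; apply: eq_bigr => i _.
rewrite mxE exprMn e exprVn sqr_sqrtr // -/(Q _ x); ring.
Qed.

Lemma P_next (B : 'M[R]_nn) (a : R) (v : 'cV[R]_nn) (j : nat) :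
  B^T *m B = 1%:M -> B + B^T = dg (fun i => cc i *+ 2) ->
  (forall G : nat -> R, dg (fun i => G (i./2)) *m B = B *m dg (fun i => G (i./2))) ->
  (j < m.+1)%N ->
  P j (normalize ((B - a%:M) *m v)) =
  step m.+1 (CC m c) a (fun l => P l v) j.
Proof.
move=> hB hs hc hj; rewrite /P Q_normalize /step.
rewrite (Q_shift _ _ hB hs (hc (fun l => (l == j)%:R))).
rewrite (Q_shift _ _ hB hs (hc (fun _ => 1))).
rewrite (Q_blocks (fun l => (l == j)%:R * fa a (CC m c l))).
rewrite (Q_blocks (fun l => 1 * fa a (CC m c l))).
rewrite (bigD1 (Ordinal hj)) //= eqxx mul1r big1 ?addr0; last first.
  move=> l hl; have -> : ((l : nat) == j) = false.
    by apply/negbTE; apply: contra hl => /eqP e; rewrite -val_eqE /= e.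
  by rewrite mul0r mul0r.
by congr (_ / _); apply: eq_bigr => l _; rewrite mul1r.
Qed.

End Spec.
Section Grade.
Variables (R : realType) (n : nat) (M : 'M[R]_n).

Lemma polyAv3 (p : {poly R}) v : size p = 3%N ->
  polyAv M p v = p`_0 *: v + p`_1 *: (M *m v) + p`_2 *: (M *m (M *m v)).
Proof. by move=> sp; rewrite /polyAv sp !big_ord_recr big_ord0 /= add0r. Qed.

Lemma annih0 v : annih_deg M v 0 -> v = 0.
Proof.
case=> p [mp sp hp]; move: hp; rewrite /polyAv sp big_ord1 /=.
have -> : p`_0 = 1 by move/monicP: mp; rewrite lead_coefE sp.
by rewrite scale1r.
Qed.

Lemma annih1 v : annih_deg M v 1 -> exists a, (M - a%:M) *m v = 0.
Proof.
case=> p [mp sp hp]; move: hp; rewrite /polyAv sp !big_ord_recr big_ord0 /= add0r.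
have -> : p`_1 = 1 by move/monicP: mp; rewrite lead_coefE sp.
move=> h; exists (- p`_0); rewrite mulmxBl mul_scalar_mx scaleNr opprK.
by rewrite addrC -h scale1r.
Qed.

Lemma grade_le v k : annih_deg M v k -> (grade M v <= k)%N.
Proof.
move=> h; rewrite /grade; case: pselect => [e|e].
  by case: ex_minnP => k' _ hmin; apply: hmin; apply/asboolP.
by exfalso; apply: e; exists k; apply/asboolP.
Qed.

Lemma grade_ann v k : annih_deg M v k -> annih_deg M v (grade M v).
Proof.
move=> h; rewrite /grade; case: pselect => [e|e].
  by case: ex_minnP => k' hk' _; apply/asboolP.
by exfalso; apply: e; exists k; apply/asboolP.
Qed.

Lemma grade_two v : v != 0 -> (forall a, (M - a%:M) *m v != 0) ->
  annih_deg M v 2 -> grade M v = 2%N.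
Proof.
move=> nz hA h2; have hle := grade_le h2; have hann := grade_ann h2.
move: hle hann; case: (grade M v) => [|[|[|k]]] // _.
- by move/annih0 => e; move: nz; rewrite e eqxx.
- by case/annih1 => a e; move: (hA a); rewrite e eqxx.
Qed.

Lemma annih_poly2 v (x : R) :
  M *m (M *m v) = (x *+ 2) *: (M *m v) - v -> annih_deg M v 2.
Proof.
move=> h; exists (Poly [:: 1; - (x *+ 2); 1]).
have hP : Poly [:: 1; - (x *+ 2); 1] = [:: 1; - (x *+ 2); 1] :> seq R.
  by apply: (@PolyK _ 0); rewrite /= oner_neq0.
split.
- by rewrite monicE lead_coefE hP /=.
- by rewrite hP.
rewrite polyAv3 ?hP // h /= !scale1r scaleNr.
set y := (x *+ 2) *: _.
by rewrite addrC addrA subrK subrr.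
Qed.

Lemma annih_poly1 v : M *m v = v -> annih_deg M v 1.
Proof.
move=> h; exists (Poly [:: -1; 1]).
have hP : Poly [:: -1; 1] = [:: -1; 1] :> seq R.
  by apply: (@PolyK _ 0); rewrite /= oner_neq0.
split.
- by rewrite monicE lead_coefE hP /=.
- by rewrite hP.
rewrite /polyAv hP /= !big_ord_recr big_ord0 /= add0r h.
by rewrite scaleN1r scale1r addNr.
Qed.

End Grade.
Section Spec2.
Variables (R : realType) (m : nat) (bt : bool).
Local Notation nn := (m.*2 + bt)%N.

Lemma P_ge0 j (x : 'cV[R]_nn) : 0 <= P j x.
Proof. by apply: sumr_ge0 => i _; rewrite mulr_ge0 ?ler0n ?sqr_ge0. Qed.

Lemma coord_le_P (x : 'cV[R]_nn) (i : 'I_nn) : x i 0 ^+ 2 <= P ((i : nat)./2) x.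
Proof.
rewrite /P /Q (bigD1 i) //= eqxx mul1r lerDl.
by apply: sumr_ge0 => l _; rewrite mulr_ge0 ?ler0n ?sqr_ge0.
Qed.

Lemma P_two (x : 'cV[R]_nn) j (h1 : (j.*2.+1 < nn)%N) :
  P j x = x (Ordinal (ltnW h1)) 0 ^+ 2 + x (Ordinal h1) 0 ^+ 2.
Proof.
rewrite /P /Q (sum_two h1) /= ?doubleK ?uphalf_double ?eqxx ?mul1r //.
by move=> l /negbTE ->; rewrite mul0r.
Qed.

Lemma Q1_eq0 (x : 'cV[R]_nn) : Q (fun _ => 1) x = 0 -> x = 0.
Proof.
move=> h; apply/matrixP => i k; rewrite (ord1 k) mxE.
have H : forall l : 'I_nn, true -> 0 <= 1 * x l 0 ^+ 2.
  by move=> l _; rewrite mul1r sqr_ge0.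
have := @psumr_eq0P _ _ (fun _ => true) (fun l => 1 * x l 0 ^+ 2) H h i isT.
by rewrite mul1r; move/eqP; rewrite sqrf_eq0; move/eqP.
Qed.

Lemma P_out (x : 'cV[R]_nn) j0 j : j != j0 ->
  (forall i : 'I_nn, (i : nat)./2 != j0 -> x i 0 = 0) -> P j x = 0.
Proof.
move=> ne hz; apply: big1 => l _; case: (eqVneq ((l : nat)./2) j) => e.
  by rewrite hz ?e // expr0n /= mulr0.
by rewrite mul0r.
Qed.

Lemma dgv_e (h : nat -> R) (v : 'cV[R]_nn) (i : 'I_nn) : (dg h *m v) i 0 = h i * v i 0.
Proof. by rewrite /dg mul_diag_mx !mxE. Qed.

End Spec2.
Theorem lemma4p4 (R : realType) (m : nat) (b : bool) (c s : nat -> R)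
  (v0 : 'cV[R]_(m.*2 + b)) :
  (forall j, (j < m)%N -> c j ^+ 2 + s j ^+ 2 = 1) ->
  (forall j, (j < m)%N -> s j != 0) ->
  ((0 < m)%N -> 0 < c 0%N) ->
  (forall j, (j.+1 < m)%N -> c j < c j.+1) ->
  enorm v0 = 1 ->
  (2 <= grade (rotA m b c s) v0)%N ->
  exists alpha beta : R,
    [/\ aci_alpha (rotA m b c s) v0 @ \oo --> alpha,
        aci_beta (rotA m b c s) v0 @ \oo --> beta,
        alpha = beta,
        exists2 j, (j < m)%N & alpha = c j
      & forall vstar, limit_vector (aci_v (rotA m b c s) v0) vstar ->
          grade (rotA m b c s) vstar = 2%N].
Proof.
move=> hcs hs hc0 hinc hv0 hgr.
have cpos : forall j, (j < m)%N -> 0 < c j.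
  elim=> [|j IH] hj; first exact: hc0.
  have := hinc j hj; have := IH (ltnW hj); lra.
have clt1 : forall j, (j < m)%N -> c j < 1.
  move=> j hj; have h1 := hcs j hj; have h2 := hs j hj; have h3 := cpos j hj.
  have : 0 < s j ^+ 2 by rewrite lt_neqAle sqr_ge0 andbT eq_sym sqrf_eq0.
  nra.
have cmono : forall i j, (i <= j)%N -> (j < m)%N -> c i <= c j.
  move=> i j hij; rewrite -(subnKC hij); elim: (j - i)%N => [|d IH].
    by rewrite addn0.
  rewrite addnS => h; apply: le_trans (IH (ltnW h)) (ltW (hinc _ h)).
pose C := CC m c.
have hC : forall j, (j < m.+1)%N -> 0 <= C j <= 1.
  move=> j hj; rewrite /C /CC; case: ifP => h; apply/andP; split => //.
  - by apply: ltW; apply: cpos.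
  - by apply: ltW; apply: clt1.
pose A := rotA m b c s.
have hAo := A_orth b hcs.
have hAto := At_orth b hcs.
pose u := aci_v A v0.
pose pk := fun k j => P j (u k).
pose qk := fun k j => P j (aci_w A (u k)).
have hQ1 : Q (fun _ => 1) v0 = 1.
  move: hv0; rewrite /enorm => /(congr1 (fun x => x ^+ 2)).
  rewrite sqr_sqrtr ?expr1n; last by apply: sumr_ge0 => i _; rewrite sqr_ge0.
  by move=> h; rewrite -[RHS]h; apply: eq_bigr => i _; rewrite mul1r.
have hsum0 : \sum_(j < m.+1) P j v0 = 1.
  rewrite -hQ1 (Q_blocks (fun _ => 1)); apply: eq_bigr => j _; by rewrite mul1r.
have hex : exists j, (j < m)%N && (P j v0 != 0).
  case: (pselect (exists j, (j < m)%N && (P j v0 != 0))) => // hne.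
  exfalso; have hz : forall j, (j < m)%N -> P j v0 = 0.
    move=> j hj; apply/eqP; apply/negPn/negP => hn; apply: hne; exists j.
    by rewrite hj hn.
  have hx : (A - 1%:M) *m v0 = 0.
    apply: Q1_eq0.
    rewrite (Q_shift _ _ hAo (A_symm m b c s) (A_comm m b c s (fun _ => 1))).
    rewrite (Q_blocks (fun l => 1 * fa 1 (CC m c l))).
    apply: big1 => j _; case: (ltnP j m) => hj; first by rewrite hz // mulr0.
    have -> : (j : nat) = m by apply/eqP; rewrite eqn_leq hj -ltnS ltn_ord.
    by rewrite /CC ltnn /fa; rewrite expr1n !mulr1 (_ : 1 + 1 - 2 = 0 :> R) ?mul0r ?mulr0 //; ring.
  have : A *m v0 = v0 by apply/eqP; rewrite -subr_eq0 -{2}(mul1mx v0) -mulmxBl hx.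
  move/annih_poly1/grade_le; rewrite -/A; move: hgr; case: (grade A v0) => [|[|k]] //.
have [j0 /andP[hj0m hP0] hmin] := ex_minnP hex.
have hbelow : forall j, (j < j0)%N -> P j v0 = 0.
  move=> j hj; apply/eqP; apply/negPn/negP => hne.
  have := hmin j; rewrite (ltn_trans hj hj0m) hne => /(_ isT).
  by rewrite leqNgt hj.
have hj0 : (j0 < m.+1)%N by apply: ltnW.
have good0 : good m.+1 j0 (pk 0%N).
  split => //.
  - by move=> j _; apply: P_ge0.
  - by rewrite lt_neqAle eq_sym hP0 P_ge0.
have hCj0 : C j0 = c j0 by rewrite /C /CC hj0m.
have hC0 : 0 < C j0 < 1 by rewrite hCj0 cpos ?clt1.
pose delta := C j0.+1 - C j0.
have hCs : C j0 < C j0.+1.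
  rewrite hCj0 /C /CC; case: ifP => h; [exact: hinc | exact: clt1].
have hd : 0 < delta <= 1.
  have := hC j0.+1 hj0m; rewrite /delta; move: hC0 hCs.
  move=> /andP[h1 h2] h3 /andP[h4 h5]; apply/andP; split; lra.
have hincC : forall j, (j0 < j < m.+1)%N -> C j0 + delta <= C j.
  move=> j /andP[h1 h2]; rewrite /delta addrC subrK.
  case: (ltnP j m) => hjm.
    by rewrite /C /CC hjm; case: ifP => h; [apply: cmono | rewrite (leq_ltn_trans h1 hjm) in h].
  have -> : j = m by apply/eqP; rewrite eqn_leq hjm -ltnS h2.
  by rewrite {2}/C /CC ltnn; case/andP: (hC j0.+1 hj0m).
have halpha : forall k, aci_alpha A v0 k = avg m.+1 C (pk k).
  by move=> k; rewrite /aci_alpha rq_Q (Q_blocks (CC m c)).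
have hbeta : forall k, aci_beta A v0 k = avg m.+1 C (qk k).
  by move=> k; rewrite /aci_beta rq_Q (Q_blocks (CC m c)).
have hq : forall k j, (j < m.+1)%N -> qk k j = step m.+1 C (avg m.+1 C (pk k)) (pk k) j.
  move=> k j hj; rewrite /qk /aci_w -halpha.
  by rewrite (P_next _ _ hAo (A_symm m b c s) (A_comm m b c s) hj).
have hp : forall k j, (j < m.+1)%N -> pk k.+1 j = step m.+1 C (avg m.+1 C (qk k)) (qk k) j.
  move=> k j hj; rewrite /pk /= /aci_next -/(aci_w A (u k)) -hbeta.
  by rewrite (P_next _ _ hAto (At_symm m b c s) (At_comm m b c s) hj).
have hseq := seq_EE hj0 hC hC0 hd hincC good0 hq hp.
pose K := EE j0 (pk 0%N); pose th := theta C j0 delta.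
have th0 : 0 <= th < 1 by rewrite theta_ge0 ?theta_lt1.
have K0 : 0 <= K := EE_ge0 hj0 good0.
exists (C j0), (C j0); split => //.
- apply: (cvg_geo (K := K) (th := th)) => // k; rewrite halpha.
  have [gk _ hk _] := hseq k; apply: le_trans (avg_close hj0 hC gk) _.
  by rewrite mulrC.
- apply: (cvg_geo (K := K) (th := th)) => // k; rewrite hbeta.
  have [_ gk _ hk] := hseq k; apply: le_trans (avg_close hj0 hC gk) _.
  by rewrite mulrC.
- by exists j0.
move=> vstar [phi [hphi hcv]].
have phik : forall k, (k <= phi k)%N.
  by elim=> // k IH; apply: leq_ltn_trans IH (hphi k).
have hEphi : forall k, EE j0 (pk (phi k)) <= K * th ^+ k.
  move=> k; have [_ _ h _] := hseq (phi k); apply: le_trans h _.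
  rewrite mulrC; apply: ler_wpM2l => //.
  by case/andP: th0 => a1 a2; apply: (ler_wiXn2l a1 (ltW a2)); apply: phik.
have hzero : forall i : 'I_(m.*2 + b), (i : nat)./2 != j0 -> vstar i 0 = 0.
  move=> i hi.
  have hi2 : ((i : nat)./2 < m.+1)%N by rewrite ltnS half_le.
  have h1 : (fun k => u (phi k) i 0 ^+ 2) @ \oo --> 0.
    apply: (cvg_geo (K := K) (th := th)) => // k.
    rewrite subr0 ger0_norm ?sqr_ge0 //; apply: le_trans (hEphi k).
    have [gk _ _ _] := hseq (phi k).
    apply: le_trans (coord_le_P _ _) (coord_small hj0 gk hi2 hi).
  have h2 : (fun k => u (phi k) i 0 ^+ 2) @ \oo --> vstar i 0 ^+ 2.
    rewrite expr2; under eq_fun do rewrite expr2.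
    by apply: cvgM; apply: hcv.
  have e : vstar i 0 ^+ 2 = 0 by apply: (norm_cvg_unique h2 h1).
  by move/eqP: e; rewrite sqrf_eq0 => /eqP.
have hi1 : (j0.*2.+1 < m.*2 + b)%N.
  by move: hj0m; rewrite -!muln2; lia.
have hblock : P j0 vstar = 1.
  have h1 : (fun k => P j0 (u (phi k))) @ \oo --> (1 : R).
    apply: (cvg_geo (K := K) (th := th)) => // k; apply: le_trans (hEphi k).
    have [gk _ _ _] := hseq (phi k).
    have := good_le1 hj0 gk; have := le_EE hj0 gk; rewrite /pk => a1 a2.
    by rewrite ler0_norm ?subr_le0 // opprB.
  have h2 : (fun k => P j0 (u (phi k))) @ \oo --> P j0 vstar.
    rewrite P_two; under eq_fun do rewrite P_two.
    by apply: cvgD; rewrite expr2; under eq_fun do rewrite expr2;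
      apply: cvgM; apply: hcv.
  by apply: (norm_cvg_unique h2 h1).
have hPout : forall j, j != j0 -> P j vstar = 0.
  by move=> j ne; apply: P_out ne hzero.
have hvnz : vstar != 0.
  apply/eqP => e; move: hblock; rewrite e /P /Q big1 => [|i _]; last first.
    by rewrite mxE expr0n mulr0.
  by move/eqP; rewrite eq_sym oner_eq0.
have hAv : forall a, (A - a%:M) *m vstar != 0.
  move=> a; apply/eqP => e.
  have := congr1 (fun x => Q (fun _ => 1) x) e; rewrite /=.
  rewrite (Q_shift _ _ hAo (A_symm m b c s) (A_comm m b c s (fun _ => 1))).
  rewrite (Q_blocks (fun l => 1 * fa a (CC m c l))).
  rewrite (bigD1 (Ordinal hj0)) //= big1 => [|j hj]; last first.
    by rewrite hPout ?mulr0 // -val_eqE.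
  rewrite hblock addr0 !mul1r /Q big1 => [|i _]; last by rewrite mxE expr0n mulr0.
  by move=> h; have := fa0_gt0 hC0 a; rewrite /C -(mulr1 (fa _ _)) h ltxx.
have hdg : dg (fun i => CC m c (i./2) *+ 2) *m vstar = (C j0 *+ 2) *: vstar.
  apply/matrixP => i k; rewrite (ord1 k) dgv_e [RHS]mxE.
  case: (eqVneq ((i : nat)./2) j0) => e; first by rewrite e.
  by rewrite hzero // !mulr0.
have hAt : A^T *m vstar = (C j0 *+ 2) *: vstar - A *m vstar.
  by rewrite -hdg -(A_symm m b c s) mulmxDl addrAC subrr add0r.
have hv : vstar = (C j0 *+ 2) *: (A *m vstar) - A *m (A *m vstar).
  have hAAt : A *m A^T = 1%:M := mulmx1C hAo.
  by rewrite -{1}(mul1mx vstar) -hAAt -mulmxA hAt mulmxBr scalemxAr.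
apply: grade_two => //; apply: (annih_poly2 (x := C j0)).
by rewrite {3}hv opprB addrC subrK.
Qed.
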